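(* Let $S$ be a numerical semigroup and let $b\in\mathrm U(\mathrm{Betti}(S))$. Then either $b$ is a minimal element of $(\mathrm{Betti}(S),\le_S)$ and all factorizations of $b$ are isolated, or the number $\mathrm i(b)$ of isolated factorizations of $b$ equals $\mathrm{nc}(\nabla_b)-1$.
   Context: A numerical semigroup $S$ is a submonoid of $(\mathbb N,+)$ with finite complement, minimally generated by $\{n_1,\dots,n_e\}$. Write $a\le_S b$ if $b-a\in S$. Let $\varphi:\mathbb N^e\to S$, $\varphi(a)=\sum_ia_in_i$; $\mathrm Z(s)=\varphi^{-1}(s)$. $\nabla_s$ is the graph on $\mathrm Z(s)$ with distinct $x,y$ adjacent iff $x\cdot y\ne0$; $\mathrm{nc}(\nabla_s)$ is its number of connected components; $s$ is a Betti element if $\nabla_s$ is disconnected; $\mathrm{Betti}(S)$ is the set of Betti elements. For a poset $(X,\le)$, $\mathrm U(X)=\{x\in X: \{y\in X:y\le x\}\text{ is totally ordered}\}$; here $X=(\mathrm{Betti}(S),\le_S)$. A factorization $z\in\mathrm Z(s)$ is isolated if $z\cdot x=0$ for all $x\in\mathrm Z(s)\setminus\{z\}$; $\mathrm i(s)$ is the number of isolated factorizations of $s$. *)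

(* Defs.v *)
From mathcomp Require Import all_boot.
Set Implicit Arguments. Unset Strict Implicit. Unset Printing Implicit Defensive.

Section NS.
Variables (e : nat) (n : 'I_e -> nat).

Definition inS (s : nat) : Prop :=
  exists a : 'I_e -> nat, \sum_(i < e) a i * n i = s.

Definition is_min_gen_numerical_semigroup : Prop :=
  (forall i, 0 < n i) /\
  (exists N, forall m, N <= m -> inS m) /\
  (forall i : 'I_e, ~ exists a : 'I_e -> nat,
        a i = 0 /\ \sum_(j < e) a j * n j = n i).

Definition leS (a b : nat) : Prop := a <= b /\ inS (b - a).

(* Vectors in N^e whose coordinates are at most s; since every n_i >= 1,
   every factorization of s is of this form. *)
Definition vec (s : nat) := {ffun 'I_e -> 'I_s.+1}.

Definition phi s (x : vec s) : nat := \sum_(i < e) (x i : nat) * n i.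

Definition Z (s : nat) : {set vec s} := [set x | phi x == s].

Definition dot s (x y : vec s) : nat := \sum_(i < e) (x i : nat) * (y i : nat).

Definition nabla_edge (s : nat) : rel (vec s) :=
  fun x y => [&& x \in Z s, y \in Z s, x != y & dot x y != 0].

Definition nc (s : nat) : nat := n_comp (@nabla_edge s) (mem (Z s)).

Definition is_Betti (s : nat) : Prop := 1 < nc s.

Definition Betti_minimal (b : nat) : Prop :=
  is_Betti b /\ forall y, is_Betti y -> leS y b -> y = b.

Definition in_U_Betti (b : nat) : Prop :=
  is_Betti b /\
  forall x y, is_Betti x -> is_Betti y -> leS x b -> leS y b -> leS x y \/ leS y x.

Definition isolated (s : nat) (z : vec s) : Prop :=
  z \in Z s /\ forall x, x \in Z s -> x != z -> dot z x = 0.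

Definition isolatedb (s : nat) (z : vec s) : bool :=
  (z \in Z s) && [forall x, ((x \in Z s) && (x != z)) ==> (dot z x == 0)].

Definition num_isolated (s : nat) : nat := #|[set z : vec s | isolatedb z]|.

End NS.

(* Main.v *)
Require Import Defs.
From mathcomp Require Import all_boot zify.
From Stdlib Require Import Classical.
Set Implicit Arguments. Unset Strict Implicit. Unset Printing Implicit Defensive.

Definition fsum e (n : 'I_e -> nat) (f : 'I_e -> nat) := \sum_(i < e) f i * n i.
Definition vf e s (x : vec e s) : 'I_e -> nat := fun i => x i.
Definition mkv e s (f : 'I_e -> nat) : vec e s := [ffun i => inord (f i)].

Lemma le_fsum e (n : 'I_e -> nat) f i : 0 < n i -> f i <= fsum n f.
Proof.
move=> hn; rewrite /fsum (bigD1 i) //=.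
apply: leq_trans (leq_addr _ _); by rewrite leq_pmulr.
Qed.

Lemma mkvE e (n : 'I_e -> nat) s f : (forall i, 0 < n i) -> fsum n f = s ->
  forall i, (mkv s f i : nat) = f i.
Proof.
move=> hn hf i; rewrite /mkv ffunE inordK //.
by rewrite ltnS -hf le_fsum.
Qed.

Lemma inZ e (n : 'I_e -> nat) s (x : vec e s) : (x \in Z n s) = (fsum n (vf x) == s).
Proof. by rewrite inE. Qed.

Lemma mkvZ e (n : 'I_e -> nat) s f : (forall i, 0 < n i) -> fsum n f = s ->
  mkv s f \in Z n s.
Proof.
move=> hn hf; rewrite inZ; apply/eqP; rewrite -[RHS]hf /fsum; apply/eq_bigr => i _.
by rewrite /vf (mkvE hn hf).
Qed.

Lemma vec_eqP e s (x y : vec e s) : reflect (forall i, vf x i = vf y i) (x == y).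
Proof.
apply: (iffP eqP) => [-> //|h]; apply/ffunP => i; apply/val_inj; exact: h.
Qed.

Lemma dot_pos e s (x y : vec e s) : dot x y != 0 <-> exists i, 0 < vf x i /\ 0 < vf y i.
Proof.
split.
- move=> h; apply: NNPP => hne; move/negP: h; apply; apply/eqP.
  rewrite /dot big1 // => i _.
  apply/eqP; rewrite muln_eq0; apply/negPn/negP => /norP [h1 h2].
  by apply: hne; exists i; rewrite !lt0n.
- case=> i [h1 h2]; rewrite /dot (bigD1 i) //= -lt0n.
  apply: leq_trans (leq_addr _ _); by rewrite muln_gt0 h1 h2.
Qed.

Lemma fsum_sub e (n : 'I_e -> nat) f a : (forall i, a i <= f i) ->
  fsum n (fun i => f i - a i) = fsum n f - fsum n a.
Proof.
move=> h; rewrite /fsum.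
have -> : \sum_(i < e) f i * n i = \sum_(i < e) (f i - a i) * n i + \sum_(i < e) a i * n i.
  by rewrite -big_split /=; apply: eq_bigr => i _; rewrite -mulnDl subnK.
by rewrite addnK.
Qed.

Lemma fsum_add e (n : 'I_e -> nat) f g : fsum n (fun i => f i + g i) = fsum n f + fsum n g.
Proof. by rewrite /fsum -big_split /=; apply: eq_bigr => i _; rewrite mulnDl. Qed.

Lemma fsum_delta e (n : 'I_e -> nat) i : fsum n (fun j => nat_of_bool (j == i)) = n i.
Proof.
rewrite /fsum (bigD1 i) //= eqxx mul1n big1 ?addn0 // => j /negbTE ->; by [].
Qed.

Lemma fsum0 e (n : 'I_e -> nat) f : (forall i, 0 < n i) -> fsum n f = 0 -> forall i, f i = 0.
Proof. move=> hn h i; have := le_fsum f (hn i); rewrite h; lia. Qed.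

Lemma dotC e s (x y : vec e s) : dot x y = dot y x.
Proof. by rewrite /dot; apply: eq_bigr => i _; rewrite mulnC. Qed.

Lemma nabla_sym e (n : 'I_e -> nat) s : @symmetric (vec e s) (@nabla_edge e n s).
Proof.
move=> x y; rewrite /nabla_edge dotC eq_sym.
by case: (x \in Z n s); case: (y \in Z n s).
Qed.

Lemma conn_Z e (n : 'I_e -> nat) s (x y : vec e s) :
  connect (@nabla_edge e n s) x y -> x \in Z n s -> y \in Z n s.
Proof.
case/connectP=> p; case/lastP: p => [|p r] /=; first by move=> _ ->.
rewrite rcons_path last_rcons => /andP [_ h] -> _.
by case/and4P: h.
Qed.

Lemma isolated_conn e (n : 'I_e -> nat) s (z y : vec e s) :
  isolatedb n z -> connect (@nabla_edge e n s) z y -> y = z.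
Proof.
case/andP=> hz /forallP hf; case/connectP=> [[|r p]] /= ; first by move=> _ ->.
case/andP=> h _ _; exfalso; case/and4P: h => _ hr hne hd.
move: (hf r); rewrite hr eq_sym hne /= => /eqP hd0.
by rewrite hd0 in hd.
Qed.

Lemma share_conn e (n : 'I_e -> nat) s (x y : vec e s) :
  x \in Z n s -> y \in Z n s -> (exists j, 0 < vf x j /\ 0 < vf y j) ->
  connect (@nabla_edge e n s) x y.
Proof.
move=> hx hy hj; have [->|hne] := eqVneq x y; first exact: connect0.
apply: connect1; rewrite /nabla_edge hx hy hne /=; exact/dot_pos.
Qed.

Lemma root_Z e (n : 'I_e -> nat) s (x : vec e s) :
  x \in Z n s -> root (@nabla_edge e n s) x \in Z n s.
Proof. move=> hx; apply: conn_Z hx; exact: connect_root. Qed.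

Lemma notBetti_conn e (n : 'I_e -> nat) s (x y : vec e s) :
  ~ is_Betti n s -> x \in Z n s -> y \in Z n s -> connect (@nabla_edge e n s) x y.
Proof.
move=> hB hx hy; have sym := sym_connect_sym (@nabla_sym e n s).
apply/(rootP sym); apply/eqP; apply/negP => hne; apply: hB.
rewrite /is_Betti /nc; apply/card_gt1P.
exists (root (@nabla_edge e n s) x), (root (@nabla_edge e n s) y).
split.
- rewrite inE /roots root_root // eqxx /=; exact: root_Z.
- rewrite inE /roots root_root // eqxx /=; exact: root_Z.
- by apply/negP => /eqP h; apply: hne; rewrite h.
Qed.

Lemma Betti_two e (n : 'I_e -> nat) s :
  is_Betti n s -> exists x y : vec e s, [/\ x \in Z n s, y \in Z n s & x != y].
Proof.
rewrite /is_Betti /nc => /card_gt1P [x [y [hx hy hne]]].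
exists x, y; move: hx hy; rewrite !inE => /andP[_ ->] /andP[_ ->]; by [].
Qed.

Lemma nonisolated_nb e (n : 'I_e -> nat) s (z : vec e s) :
  z \in Z n s -> ~~ isolatedb n z -> exists x, [/\ x \in Z n s, x != z & dot z x != 0].
Proof.
move=> hz; rewrite /isolatedb hz /= => /forallPn [x].
rewrite negb_imply => /andP [/andP [hx hne] hd]; by exists x.
Qed.

Lemma count_nc e (n : 'I_e -> nat) s (z0 : vec e s) :
  z0 \in Z n s -> ~~ isolatedb n z0 ->
  (forall z, z \in Z n s -> ~~ isolatedb n z -> connect (@nabla_edge e n s) z z0) ->
  nc n s = (num_isolated n s).+1.
Proof.
move=> hz0 hni hall; have sym := sym_connect_sym (@nabla_sym e n s).
set E := @nabla_edge e n s; set r0 := root E z0.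
have r0Z : r0 \in Z n s by exact: root_Z.
have r0ni : ~~ isolatedb n r0.
  apply/negP => hi.
  have h1 : connect E r0 z0 by rewrite sym connect_root.
  move: (isolated_conn hi h1) => h; by rewrite h hi in hni.
rewrite /nc /num_isolated.
have -> : (#|[set z : vec e s | isolatedb n z]|).+1 =
  #|[predU1 r0 & [set z : vec e s | isolatedb n z]]| by rewrite cardU1 inE r0ni.
apply: eq_card => x; rewrite !inE /roots.
apply/andP/idP.
- case=> /eqP hr hx; have hxZ : x \in Z n s by rewrite inE.
  have [hi|hni2] := boolP (isolatedb n x); first by rewrite orbT.
  apply/orP; left; apply/eqP; rewrite -hr; apply/(rootP sym); exact: hall.
- case/orP => [/eqP ->|hi].
  + by rewrite root_root // eqxx; move: r0Z; rewrite inE.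
  + have hx : x \in Z n s by case/andP: hi.
    split; last by move: hx; rewrite inE.
    apply/eqP; exact: isolated_conn hi (connect_root E x).
Qed.

Lemma vf_mkv e (n : 'I_e -> nat) s f : (forall i, 0 < n i) -> fsum n f = s ->
  forall i, vf (mkv s f) i = f i.
Proof. move=> hn hf i; exact: mkvE hn hf i. Qed.

Lemma Z_fsum e (n : 'I_e -> nat) s (x : vec e s) : x \in Z n s -> fsum n (vf x) = s.
Proof. by rewrite inZ => /eqP. Qed.

Lemma vec_neq e s (x y : vec e s) : x != y -> exists j, vf x j <> vf y j.
Proof.
move=> h; apply: NNPP => hn; move/negP: h; apply; apply/vec_eqP => j.
apply: NNPP => hj; apply: hn; by exists j.
Qed.

Lemma sub_delta e (n : 'I_e -> nat) s (f : 'I_e -> nat) i :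
  fsum n f = s -> 0 < f i -> fsum n (fun j => f j - (j == i)) = s - n i.
Proof.
move=> hf hi; rewrite fsum_sub ?hf ?fsum_delta //.
move=> j; case: eqP => [->|] //=.
Qed.

Lemma lemmaM e (n : 'I_e -> nat) : (forall i, 0 < n i) ->
  forall s p q, fsum n p = s -> fsum n q = s -> (exists i, p i <> q i) ->
  exists b a, [/\ is_Betti n b, fsum n a = b & forall i, a i <= p i].
Proof.
move=> hn s; elim/ltn_ind: s => s IH p q hp hq [i0 hi0].
case: (classic (is_Betti n s)) => hB; first by exists s, p.
have vpZ := mkvZ hn hp; have vqZ := mkvZ hn hq.
have hne : mkv s p != mkv s q.
  apply/negP => /vec_eqP h; apply: hi0; move: (h i0).
  by rewrite (vf_mkv hn hp) (vf_mkv hn hq).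
have := notBetti_conn hB vpZ vqZ.
case/connectP => [[|r pth]] /=; first by move=> _ h; rewrite h eqxx in hne.
case/andP => hedge _ _; case/and4P: hedge => _ hrZ hner hd.
case/dot_pos: hd => i []; rewrite (vf_mkv hn hp) => h1 h2.
have hr := Z_fsum hrZ.
case: (vec_neq hner) => j; rewrite (vf_mkv hn hp) => hj.
have s0 : 0 < s by have := le_fsum p (hn i); rewrite hp; lia.
have hlt : s - n i < s by have := hn i; lia.
have hj' : exists j, p j - (j == i) <> vf r j - (j == i).
  exists j; case: (eqVneq j i) => [ej|nej].
  - subst j; lia.
  - by rewrite !subn0.
have [b [a [hb ha hap]]] := IH _ hlt _ _ (sub_delta hp h1) (sub_delta hr h2) hj'.
exists b, a; split => // k; apply: leq_trans (hap k) _; exact: leq_subr.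
Qed.

Lemma pos_coord e (n : 'I_e -> nat) f : 0 < fsum n f -> exists j, 0 < f j.
Proof.
move=> h; apply: NNPP => hn; move: h; rewrite /fsum big1 // => i _.
have : f i = 0 by apply: NNPP => hi; apply: hn; exists i; lia.
by move=> ->.
Qed.

Lemma fsum_le e (n : 'I_e -> nat) f g : (forall i, f i <= g i) -> fsum n f <= fsum n g.
Proof. move=> h; apply: leq_sum => i _; exact: leq_mul. Qed.

Lemma Betti_pos e (n : 'I_e -> nat) s : (forall i, 0 < n i) -> is_Betti n s -> 0 < s.
Proof.
move=> hn /Betti_two [x [y [hx hy hne]]]; rewrite lt0n; apply/negP => /eqP s0.
subst s; move/negP: hne; apply; apply/vec_eqP => j.
have hx0 := fsum0 hn (Z_fsum hx); have hy0 := fsum0 hn (Z_fsum hy).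
by rewrite hx0 hy0.
Qed.

Lemma nb_Betti e (n : 'I_e -> nat) b (z x : vec e b) : (forall i, 0 < n i) ->
  z \in Z n b -> x \in Z n b -> x != z -> dot z x != 0 ->
  exists bt a, [/\ is_Betti n bt, fsum n a = bt, (forall i, a i <= vf z i),
                   leS n bt b & bt <> b].
Proof.
move=> hn hz hx hxz hd.
case/dot_pos: hd => i [h1 h2].
have hzs := Z_fsum hz; have hxs := Z_fsum hx.
have [j hj] := vec_neq hxz.
have hj' : exists j, vf z j - (j == i) <> vf x j - (j == i).
  exists j; case: (eqVneq j i) => [ej|nej].
  - subst j; lia.
  - by rewrite !subn0; move=> E; apply: hj.
have [bt [a [hb ha hap]]] := lemmaM hn (sub_delta hzs h1) (sub_delta hxs h2) hj'.
have haz : forall k, a k <= vf z k by move=> k; apply: leq_trans (hap k) (leq_subr _ _).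
have hdiff := fsum_sub n haz; rewrite hzs ha in hdiff.
have hle : bt <= b by rewrite -ha -hzs; exact: fsum_le.
have hpos := le_fsum (fun k => vf z k - a k) (hn i).
have hai := hap i; rewrite eqxx /= in hai.
exists bt, a; split => //.
- split => //; exists (fun k => vf z k - a k); exact: hdiff.
- move=> E; rewrite hdiff E subnn in hpos; lia.
Qed.
Lemma max_exists (P : nat -> Prop) b : (exists k, P k) -> (forall k, P k -> k <= b) ->
  exists m, P m /\ forall k, P k -> k <= m.
Proof.
elim: b => [|b IH] hex hub.
- case: hex => k hk; have k0 : k = 0 by have := hub k hk; lia.
  subst k; exists 0; split => // k hk'; exact: hub.
- case: (classic (P b.+1)) => hPb; first by exists b.+1.
  apply: IH => // k hk; have := hub k hk; case: (eqVneq k b.+1) => [ek|nek].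
  + by subst k.
  + lia.
Qed.

Lemma leS_refl e (n : 'I_e -> nat) x : leS n x x.
Proof. split => //; exists (fun _ => 0); rewrite subnn big1 //. Qed.

Theorem theorem5p9 (e : nat) (n : 'I_e -> nat) (b : nat) :
  is_min_gen_numerical_semigroup n ->
  in_U_Betti n b ->
  (Betti_minimal n b /\ (forall z : vec e b, z \in Z n b -> isolated n z))
  \/ num_isolated n b = (nc n b).-1.
Proof.
move=> [hn _] [hBb hU].
pose P bt := is_Betti n bt /\ leS n bt b /\ bt <> b.
case: (classic (exists bt, P bt)) => [hex|hnex]; last first.
  left; split.
  - split => // y hy hle; apply: NNPP => hyb; apply: hnex; exists y; by split.
  - move=> z hz; split => // x hx hxz; apply: NNPP => hd.
    have hd' : dot z x != 0 by apply/eqP.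
    have [bt [a [hb _ _ hle hne]]] := nb_Betti hn hz hx hxz hd'.
    apply: hnex; exists bt; by split.
have [bs [[hbs [hlebs hnebs]] hmax]] := @max_exists P b hex (fun k (hk : P k) => proj1 (proj1 (proj2 hk))).
have below : forall bt, P bt -> leS n bt bs.
  move=> bt hP; have hm := hmax bt hP.
  case: hP => hbt [hlet _].
  case: (hU bt bs hbt hbs hlet hlebs) => // [[hl _]].
  have -> : bt = bs by apply/eqP; rewrite eqn_leq hl hm.
  exact: leS_refl.
right.
have [u [v [hu hv huv]]] := Betti_two hbs.
case: hlebs => hbsb [w hw]; change (fsum n w = b - bs) in hw.
have [i1 hi1] : exists j, 0 < w j by apply: (@pos_coord e n); rewrite hw; have := hnebs; lia.
have hus := Z_fsum hu; have hvs := Z_fsum hv.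
have f0 : fsum n (fun j => vf u j + w j) = b by rewrite fsum_add hus hw; lia.
have f1 : fsum n (fun j => vf v j + w j) = b by rewrite fsum_add hvs hw; lia.
set z0 := mkv b (fun j => vf u j + w j).
set z1 := mkv b (fun j => vf v j + w j).
have z0Z : z0 \in Z n b by exact: mkvZ.
have z1Z : z1 \in Z n b by exact: mkvZ.
have z0v := vf_mkv hn f0; have z1v := vf_mkv hn f1.
have hz10 : z1 != z0.
  apply/negP => /vec_eqP h; have [j hj] := vec_neq huv; apply: hj.
  move: (h j); rewrite z0v z1v; lia.
have hni : ~~ isolatedb n z0.
  apply/negP => /andP [_ /forallP h]; move: (h z1); rewrite z1Z hz10 /= => /eqP hd.
  have : dot z0 z1 != 0 by apply/dot_pos; exists i1; rewrite z0v z1v; lia.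
  by rewrite hd.
suff -> : nc n b = (num_isolated n b).+1 by [].
apply: (count_nc z0Z hni) => z hz hzni.
have [x [hx hxz hd]] := nonisolated_nb hz hzni.
have [bt [a [hbt ha haz hlet hnet]]] := nb_Betti hn hz hx hxz hd.
have [hbtbs [tf htf]] := below bt (conj hbt (conj hlet hnet)); change (fsum n tf = bs - bt) in htf.
have fy : fsum n (fun j => a j + tf j + w j) = b.
  rewrite !fsum_add ha htf hw; case: hlet => hh _; lia.
set y := mkv b (fun j => a j + tf j + w j).
have yZ : y \in Z n b by exact: mkvZ.
have yv := vf_mkv hn fy.
have [j hj] : exists j, 0 < a j by apply: (@pos_coord e n); rewrite ha; exact: Betti_pos hbt.
apply: (connect_trans (y:=y)).
- apply: share_conn => //; exists j; rewrite yv; have := haz j; lia.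
- apply: share_conn => //; exists i1; rewrite yv z0v; lia.
Qed.
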